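(* Let $\mathbb{F}\in\{\mathbb{R},\mathbb{C}\}$, let $N\ge 2$, $M\ge 2$ and $1\le Q\le M$ be integers, write $\mathcal{M}=\{1,\dots,M\}$, let $0\le\epsilon\le 1$, and let $\mathbf{H}_1,\dots,\mathbf{H}_M$ be $N\times N$ positive semidefinite matrices (real symmetric if $\mathbb{F}=\mathbb{R}$, complex Hermitian if $\mathbb{F}=\mathbb{C}$). Consider the problem (SDP1): minimize $\mathrm{Tr}[\mathbf{X}^{(2)}]$ over a real symmetric $(M+1)\times(M+1)$ matrix $\mathbf{X}^{(1)}$ and an $N\times N$ matrix $\mathbf{X}^{(2)}$ (real symmetric if $\mathbb{F}=\mathbb{R}$, Hermitian if $\mathbb{F}=\mathbb{C}$) subject to $\mathrm{Tr}[\mathbf{H}_i\mathbf{X}^{(2)}]\ge \frac{1+\mathbf{X}^{(1)}[i,M+1]}{2}+\frac{1-\mathbf{X}^{(1)}[i,M+1]}{2}\,\epsilon$ for all $i\in\mathcal{M}$, $\sum_{i\in\mathcal{M}}\mathbf{X}^{(1)}[i,M+1]=2Q-M$, $\mathbf{X}^{(1)}[i,i]=1$ for $i=1,\dots,M+1$, $\mathbf{X}^{(1)}\succeq 0$, $\mathbf{X}^{(2)}\succeq 0$. Consider also the problem (SDP2): minimize $\mathrm{Tr}[\mathbf{X}^{(2)}]$ over $\boldsymbol{\beta}=(\beta_1,\dots,\beta_M)^T\in\mathbb{R}^M$ and an $N\times N$ matrix $\mathbf{X}^{(2)}$ (real symmetric if $\mathbb{F}=\mathbb{R}$, Hermitian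 if $\mathbb{F}=\mathbb{C}$) subject to $\mathrm{Tr}[\mathbf{H}_i\mathbf{X}^{(2)}]\ge \beta_i+(1-\beta_i)\epsilon$ for all $i\in\mathcal{M}$, $\sum_{i\in\mathcal{M}}\beta_i=Q$, $0\le\beta_i\le 1$ for all $i\in\mathcal{M}$, $\mathbf{X}^{(2)}\succeq 0$. If $(\tilde{\mathbf{X}}^{(1)},\tilde{\mathbf{X}}^{(2)})$ is an optimal solution of (SDP1), then $(\tilde{\boldsymbol{\beta}},\tilde{\mathbf{X}}^{(2)})$ with $\tilde{\boldsymbol{\beta}}[i]=\frac12+\frac12\tilde{\mathbf{X}}^{(1)}[i,M+1]$, $i\in\mathcal{M}$, is an optimal solution of (SDP2). Conversely, if $(\bar{\boldsymbol{\beta}},\bar{\mathbf{X}}^{(2)})$ is an optimal solution of (SDP2), then there is a real symmetric matrix $\mathbf{X}^{(1)}$ with $\mathbf{X}^{(1)}[i,M+1]=2\bar{\boldsymbol{\beta}}[i]-1$ for all $i\in\mathcal{M}$ such that $(\mathbf{X}^{(1)},\bar{\mathbf{X}}^{(2)})$ is an optimal solution of (SDP1).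
   Context: $\mathbf{X}[i,j]$ denotes the $(i,j)$ entry of a matrix, $\mathbf{X}\succeq 0$ means positive semidefinite, and $\mathrm{Tr}$ is the trace. (SDP1) is the semidefinite relaxation of a lifted reformulation of the mixed binary problem ''minimize $\|\mathbf{w}\|^2$ over $\mathbf{w}\in\mathbb{F}^N$, $\boldsymbol\beta\in\{0,1\}^M$ subject to $\mathbf{w}^H\mathbf{H}_i\mathbf{w}\ge\beta_i+(1-\beta_i)\epsilon$, $\sum_i\beta_i=Q$'', in which the binary variables are encoded as $\alpha_i=2\beta_i-1\in\{-1,1\}$ together with an auxiliary variable $\ell\in\{-1,1\}$ occupying index $M+1$. *)

(* Defs.v *)
(* F in {R, C}: we work with matrices over C := R[i]
   (R : realType), and the case F = R is encoded by requiring all entries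
   to be real (Num.real), via the boolean flag [realF]. *)
From HB Require Import structures.
From mathcomp Require Import all_boot all_order all_algebra.
From mathcomp Require Import reals complex.
Set Implicit Arguments. Unset Strict Implicit. Unset Printing Implicit Defensive.
Import Order.TTheory GRing.Theory Num.Theory.
Local Open Scope ring_scope.

Section Defs.
Variable C : numClosedFieldType.

Definition ctrmx (m n : nat) (A : 'M[C]_(m, n)) : 'M[C]_(n, m) :=
  \matrix_(i, j) (A j i)^*.

Definition is_hermitian (n : nat) (A : 'M[C]_n) : Prop := ctrmx A = A.


Definition is_psd (n : nat) (A : 'M[C]_n) : Prop :=
  is_hermitian A /\ forall z : 'cV[C]_n, 0 <= (ctrmx z *m A *m z) 0 0.

Definition Fmx (realF : bool) (n : nat) (A : 'M[C]_n) : Prop :=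
  is_hermitian A /\ (realF -> A \is a realmx).

(* index i of M = {1..M} as a row index of an (M+1)x(M+1) matrix;
   ord_max is the index M+1 *)
Definition idxM (M : nat) (i : 'I_M) : 'I_M.+1 := widen_ord (leqnSn M) i.

Section Problems.
Variables (realF : bool) (N M Q : nat) (eps : C) (H : 'I_M -> 'M[C]_N).

Definition feasible1 (X1 : 'M[C]_M.+1) (X2 : 'M[C]_N) : Prop :=
  [/\ X1 \is a realmx, is_hermitian X1, Fmx realF X2, is_psd X1 & is_psd X2] /\
  [/\
      (forall i : 'I_M,
          \tr (H i *m X2) >= (1 + X1 (idxM i) ord_max) / 2
                             + (1 - X1 (idxM i) ord_max) / 2 * eps),
      \sum_(i < M) X1 (idxM i) ord_max = 2 * Q%:R - M%:R
      & (forall k : 'I_M.+1, X1 k k = 1)].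

Definition optimal1 (X1 : 'M[C]_M.+1) (X2 : 'M[C]_N) : Prop :=
  feasible1 X1 X2 /\
  forall Y1 Y2, feasible1 Y1 Y2 -> \tr X2 <= \tr Y2.

Definition feasible2 (beta : 'I_M -> C) (X2 : 'M[C]_N) : Prop :=
  [/\ (forall i, beta i \is Num.real), Fmx realF X2, is_psd X2 &
      (forall i, 0 <= beta i <= 1)] /\
  (forall i : 'I_M, \tr (H i *m X2) >= beta i + (1 - beta i) * eps) /\
  \sum_(i < M) beta i = Q%:R.

Definition optimal2 (beta : 'I_M -> C) (X2 : 'M[C]_N) : Prop :=
  feasible2 beta X2 /\
  forall beta' Y2, feasible2 beta' Y2 -> \tr X2 <= \tr Y2.

End Problems.
End Defs.

(* Main.v *)
Require Import Defs.
From HB Require Import structures.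
From mathcomp Require Import all_boot all_order all_algebra.
From mathcomp Require Import reals complex.
Import Order.TTheory GRing.Theory Num.Theory.
Local Open Scope ring_scope.

From mathcomp Require Import ring.
Set Implicit Arguments. Unset Strict Implicit.

Section S.
Variable C : numClosedFieldType.

Lemma sum_delta n (p : 'I_n) (f : 'I_n -> C) :
  \sum_k ((k == p)%:R * f k) = f p.
Proof.
rewrite (bigD1 p) //= eqxx mul1r big1 ?addr0 // => k /negbTE ->; by rewrite mul0r.
Qed.

Lemma sum_delta2 n (p q : 'I_n) (a b : C) (f : 'I_n -> C) :
  \sum_k ((a * (k == p)%:R + b * (k == q)%:R) * f k) = a * f p + b * f q.
Proof.
rewrite -(sum_delta p (fun k => a * f k)) -(sum_delta q (fun k => b * f k)).
rewrite -big_split /=; apply: eq_bigr => k _; ring.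
Qed.

Lemma qform2 n (A : 'M[C]_n) (p q : 'I_n) (a b : C) :
  let z : 'cV[C]_n := \col_k (a * (k == p)%:R + b * (k == q)%:R) in
  (ctrmx z *m A *m z) 0 0 =
   a^* * a * A p p + a^* * b * A p q + b^* * a * A q p + b^* * b * A q q.
Proof.
move=> z; rewrite !mxE.
have E : forall j, (ctrmx z *m A) 0 j = a^* * A p j + b^* * A q j.
  move=> j; rewrite !mxE -(sum_delta2 p q a^* b^* (fun k => A k j)); apply: eq_bigr => k _.
  by rewrite !mxE rmorphD !rmorphM /= !conjC_nat.
under eq_bigr => j _ do rewrite E !mxE.
rewrite (eq_bigr (fun j => (a * (j == p)%:R + b * (j == q)%:R) * (a^* * A p j + b^* * A q j))); last by move=> j _; rewrite mulrC.
rewrite sum_delta2; ring.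
Qed.

Lemma idxM_neq M (i : 'I_M) : idxM i != ord_max.
Proof. by rewrite -(inj_eq val_inj) /= neq_ltn ltn_ord. Qed.

Lemma idxM_lift M (i : 'I_M) : idxM i = lift ord_max i.
Proof. by apply: val_inj; rewrite /= /bump leqNgt ltn_ord. Qed.

Lemma feas12 realF N M Q (eps : C) (H : 'I_M -> 'M[C]_N) X1 X2 :
  feasible1 realF Q eps H X1 X2 ->
  feasible2 realF Q eps H (fun i => 1 / 2 + 1 / 2 * X1 (idxM i) ord_max) X2.
Proof.
case=> [[Xr Xh FX2 [_ Xpsd] PX2] [Htr Hsum Hdiag]].
have xr : forall k l, X1 k l \is Num.real by apply/mxOverP.
have sym : forall i, X1 ord_max (idxM i) = X1 (idxM i) ord_max.
  move=> i; rewrite -{1}Xh mxE conj_Creal //.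
have key : forall i s, s \is Num.real -> s * s = 1 -> 0 <= 2 + 2 * s * X1 (idxM i) ord_max.
  move=> i s sr ss.
  have := Xpsd (\col_k (1 * (k == idxM i)%:R + s * (k == ord_max)%:R)).
  rewrite qform2 !Hdiag sym conjC1 conj_Creal // !mulr1 !mul1r ss.
  by have -> : 1 + s * X1 (idxM i) ord_max + s * X1 (idxM i) ord_max + 1 = 2 + 2 * s * X1 (idxM i) ord_max by ring.
have two0 : (2 : C) != 0 by rewrite pnatr_eq0.
have k1 : forall i, 0 <= 2 + 2 * X1 (idxM i) ord_max.
  by move=> i; have := key i 1 (rpred1 _) (mulr1 _); rewrite mulr1.
have k2 : forall i, 0 <= 2 - 2 * X1 (idxM i) ord_max.
  move=> i; have := key i (-1); rewrite mulrNN mulr1 rpredN rpred1 => /(_ isT erefl).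
  by rewrite mulrN1 mulNr.
split; [split|split].
- move=> i; have r2 : (1 / 2 : C) \is Num.real by rewrite realE divr_ge0 ?ler0n ?ler01.
  exact: (rpredD r2 (rpredM r2 (xr _ _))).
- exact: FX2.
- exact: PX2.
- move=> i; apply/andP; split.
  rewrite (_ : 1 / 2 + 1 / 2 * X1 (idxM i) ord_max = (2 + 2 * X1 (idxM i) ord_max) / 4).
    by rewrite divr_ge0 ?ler0n.
  by field.
  rewrite -subr_ge0 (_ : 1 - (1 / 2 + 1 / 2 * X1 (idxM i) ord_max) = (2 - 2 * X1 (idxM i) ord_max) / 4).
    by rewrite divr_ge0 ?ler0n.
  by field.
- move=> i; move: (Htr i); apply: le_trans; rewrite le_eqVlt; apply/orP; left; apply/eqP.
  by field.
rewrite big_split /= sumr_const card_ord -mulr_sumr Hsum -mulr_natr.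
by field.
Qed.
Definition vvec M (beta : 'I_M -> C) (k : 'I_M.+1) : C :=
  if unlift ord_max k is Some i then 2 * beta i - 1 else 1.

Definition X1of M (beta : 'I_M -> C) : 'M[C]_M.+1 :=
  \matrix_(k, l) (vvec beta k * vvec beta l + (k == l)%:R * (1 - vvec beta k ^+ 2)).

Lemma qformX1 n (v d : 'I_n -> C) (z : 'cV[C]_n) :
  (forall k, v k \is Num.real) ->
  (ctrmx z *m (\matrix_(k, l) (v k * v l + (k == l)%:R * d k)) *m z) 0 0 =
  (\sum_k (z k 0)^* * v k) * (\sum_k (z k 0)^* * v k)^* + \sum_k d k * ((z k 0)^* * z k 0).
Proof.
move=> vr; set S := \sum_k _ * _.
have E : forall l, (ctrmx z *m (\matrix_(k, l) (v k * v l + (k == l)%:R * d k))) 0 l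
   = S * v l + (z l 0)^* * d l.
  move=> l; rewrite !mxE.
  under eq_bigr => k _ do rewrite !mxE mulrDr.
  rewrite big_split /= mulr_suml; congr (_ + _).
    by apply: eq_bigr => k _; rewrite mulrA.
  rewrite -(sum_delta l (fun k => (z k 0)^* * d k)); apply: eq_bigr => k _; ring.
rewrite mxE; under eq_bigr => l _ do rewrite E mulrDl.
rewrite big_split /=; congr (_ + _).
  under eq_bigr => l _ do rewrite -mulrA.
  rewrite -mulr_sumr; congr (_ * _); rewrite rmorph_sum; apply: eq_bigr => l _.
  by rewrite rmorphM /= conjCK conj_Creal // mulrC.
by apply: eq_bigr => l _; ring.
Qed.

Lemma feas21 realF N M Q (eps : C) (H : 'I_M -> 'M[C]_N) beta X2 :
  feasible2 realF Q eps H beta X2 ->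
  [/\ X1of beta \is a realmx, is_hermitian (X1of beta),
      (forall i : 'I_M, X1of beta (idxM i) ord_max = 2 * beta i - 1) &
      feasible1 realF Q eps H (X1of beta) X2].
Proof.
case=> [[br FX2 PX2 b01] [Htr Hsum]].
have vr : forall k, vvec beta k \is Num.real.
  move=> k; rewrite /vvec; case: unlift => [i|]; last exact: rpred1.
  by rewrite rpredB ?rpred1 // rpredM ?br // realn.
have dge0 : forall k, 0 <= 1 - vvec beta k ^+ 2.
  move=> k; rewrite /vvec; case: unlift => [i|]; last by rewrite expr1n subrr.
  have /andP [b0 b1] := b01 i.
  rewrite (_ : 1 - (2 * beta i - 1) ^+ 2 = 4 * (beta i * (1 - beta i))); last by ring.
  apply: mulr_ge0; first by rewrite ler0n.
  by apply: mulr_ge0 => //; rewrite subr_ge0.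
have ent : forall i : 'I_M, X1of beta (idxM i) ord_max = 2 * beta i - 1.
  move=> i; rewrite mxE (negbTE (idxM_neq i)) mul0r addr0 /vvec idxM_lift liftK.
  by rewrite unlift_none mulr1.
have Xr : X1of beta \is a realmx.
  by apply/mxOverP => k l; rewrite mxE rpredD ?rpredM ?rpred_nat ?rpredB ?rpred1 ?rpredX ?vr.
have Xh : is_hermitian (X1of beta).
  apply/matrixP => k l; rewrite !mxE conj_Creal; last by move/mxOverP: Xr => /(_ l k); rewrite mxE.
  rewrite mulrC eq_sym; case: eqP => [->|] //; by rewrite !mul0r.
split => //; split; [split=> //|split].
- split=> // z; rewrite /X1of qformX1 //.
  apply: addr_ge0; first exact: mul_conjC_ge0.
  apply: sumr_ge0 => k _; apply: mulr_ge0 => //.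
  by rewrite mulrC mul_conjC_ge0.
- move=> i; rewrite ent; move: (Htr i); apply: le_trans.
  rewrite le_eqVlt; apply/orP; left; apply/eqP; by field.
- under eq_bigr => i _ do rewrite ent.
  by rewrite sumrB -mulr_sumr Hsum sumr_const card_ord.
- by move=> k; rewrite mxE eqxx mul1r addrC subrK.
Qed.
End S.

Theorem lemma2p1 (R : realType) (realF : bool) (N M Q : nat) (eps : R[i])
    (H : 'I_M -> 'M[R[i]]_N) :
  (2 <= N)%N -> (2 <= M)%N -> (1 <= Q <= M)%N ->
  eps \is Num.real -> 0 <= eps <= 1 ->
  (forall i, Fmx realF (H i) /\ is_psd (H i)) ->
  (forall (X1 : 'M[R[i]]_M.+1) (X2 : 'M[R[i]]_N),
      optimal1 realF Q eps H X1 X2 ->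
      optimal2 realF Q eps H (fun i => 1 / 2 + 1 / 2 * X1 (idxM i) ord_max) X2)
  /\
  (forall (beta : 'I_M -> R[i]) (X2 : 'M[R[i]]_N),
      optimal2 realF Q eps H beta X2 ->
      exists X1 : 'M[R[i]]_M.+1,
        [/\ X1 \is a realmx, is_hermitian X1,
            (forall i : 'I_M, X1 (idxM i) ord_max = 2 * beta i - 1) &
            optimal1 realF Q eps H X1 X2]).
Proof.
move=> _ _ _ _ _ _; split.
- move=> X1 X2 [F1 O1]; split; first exact: feas12.
  move=> beta' Y2 F2; have [_ _ _ F1'] := feas21 F2; exact: O1 F1'.
- move=> beta X2 [F2 O2]; have [Xr Xh ent F1] := feas21 F2.
  exists (X1of beta); split => //; split => // Y1 Y2 F1'.
  exact: O2 (feas12 F1').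
Qed.
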